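(* Let $\beta>0$ and $m\ge1$. For $\delta>0$ and $n\ge1$ let $\mathcal{B}_\delta$ be the event \[ \sum_{i=1}^n\left(\frac{\Delta(H_{mi})}{(mi)^{2/(2+\beta)}}\right)^2\ge n^{\frac{\beta}{2+\beta}+\delta}. \] Then for any $\delta>0$ and $\gamma>0$ there exists a constant $L$, depending on $\delta,\gamma,\beta,m$ but not on $n$, such that $\Pr(\mathcal{B}_\delta)\le L\,n^{-\gamma}$ for all $n\ge1$.
   Context: Fix a real $\beta>0$ and a positive integer $m$. The random tree process $(G^n_{1,\beta})_{n\ge1}$ is defined as follows. $G^1_{1,\beta}$ consists of a single vertex $v_1$ and no edges. Given $G^n_{1,\beta}$ with vertices $v_1,\dots,v_n$ and directed edges $e_2,\dots,e_n$ (where $e_i$ is the edge whose tail is $v_i$), $G^{n+1}_{1,\beta}$ is obtained by adding a vertex $v_{n+1}$ and a directed edge $e_{n+1}$ with tail $v_{n+1}$ and head a ''target vertex'' determined by a random variable $f_{n+1}$, independent of $f_2,\dots,f_n$, taking values in $\Omega_{n+1}=\{(i,v):1\le i\le n\}\cup\{(i,h),(i,t):2\le i\le n\}$ with $\Pr(f_{n+1}=(i,v))=\beta/((2+\beta)n-2)$ and $\Pr(f_{n+1}=(i,h))=\Pr(f_{n+1}=(i,t))=1/((2+\beta)n-2)$. If $f_{n+1}=(i,v)$ the target is $v_i$ (chosen ''uniformly''); if $f_{n+1}=(i,h)$ the target is the head of $e_i$, and if $f_{n+1}=(i,t)$ the target is the tail $v_i$ of $e_i$ (chosen ''preferentially'',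 by copying the head half-edge, resp. tail half-edge, of $e_i$). Consequently the target is $v_i$ with probability $(d_n(v_i)+\beta)/((2+\beta)n-2)$, where $d_n(v)$ is the degree of $v$ in $G^n_{1,\beta}$. Each edge is regarded as two half-edges, one at each endpoint; the degree of a vertex is the number of half-edges at it (loops count twice). For $t\ge1$, $H_t$ is the undirected multigraph formed from $G^t_{1,\beta}$ by identifying, for each $j<\lceil t/m\rceil$, the vertices $v_{(j-1)m+1},\dots,v_{jm}$ into one vertex $w_j$, and identifying the remaining vertices into one vertex $w_{\lceil t/m\rceil}$ (all edges kept). $\Delta(G)$ denotes the maximum degree of $G$. Known input (M\'ori): for any positive integer $k$ there exists $\tilde M_k$ such that for all $n$, $\mathbb{E}\big[\big((\Delta(G^n_{1,\beta})+\beta)/n^{1/(2+\beta)}\big)^k\big]\le\tilde M_k$. *)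

(* Defs.v *)
(* Reals.  The random tree process G^n_{1,beta} is a finite
   random process; probabilities are computed exactly as finite weighted
   sums over all possible choice sequences (f_2, ..., f_N). *)
From Stdlib Require Import Reals List Arith.
Import ListNotations.
Open Scope R_scope.

(* A value of f_{n+1} in Omega_{n+1}:  CV i = (i,v), CH i = (i,h), CT i = (i,t). *)
Inductive choice : Type := CV (i : nat) | CH (i : nat) | CT (i : nat).

(* Omega_{n+1}, where n = number of existing vertices. *)
Definition omega (n : nat) : list choice :=
  map CV (seq 1 n) ++ map CH (seq 2 (n - 1)) ++ map CT (seq 2 (n - 1)).

(* Pr(f_{n+1} = f). *)
Definition pw (beta : R) (n : nat) (f : choice) : R :=
  match f with
  | CV _ => beta / ((2 + beta) * INR n - 2)
  | _ => 1 / ((2 + beta) * INR n - 2)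
  end.

Definition sumR (l : list R) : R := fold_right Rplus 0 l.

(* Expectation of g over outcomes (f_2,...,f_N) of the process G^N, N >= 1:
   [expect_from beta steps n fs g] : currently n vertices, choices fs made so far,
   [steps] more vertices to add. *)
Fixpoint expect_from (beta : R) (steps n : nat) (fs : list choice)
  (g : list choice -> R) : R :=
  match steps with
  | O => g fs
  | S s => sumR (map (fun f => pw beta n f *
                        expect_from beta s (S n) (fs ++ [f]) g) (omega n))
  end.

Definition expect (beta : R) (N : nat) (g : list choice -> R) : R :=
  expect_from beta (N - 1) 1 [] g.

(* Head (as a vertex index) of the new edge given heads of e_2..e_n
   (hs has head of e_k at position k-2) and the choice f. *)
Definition target (hs : list nat) (f : choice) : nat :=
  match f with
  | CV i => i
  | CH i => nth (i - 2) hs 0%nat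
  | CT i => i
  end.

(* heads fs = [head e_2; ...; head e_N] for fs = [f_2; ...; f_N]. *)
Definition heads (fs : list choice) : list nat :=
  fold_left (fun hs f => hs ++ [target hs f]) fs [].

Definition ceil_div (a m : nat) : nat := ((a + m - 1) / m)%nat.

(* Index j of the vertex w_j of H_t containing v_v. *)
Definition blk (m t v : nat) : nat := Nat.min (ceil_div v m) (ceil_div t m).

Definition b2n (b : bool) : nat := if b then 1%nat else 0%nat.

(* Degree of w_j in H_t: half-edges of e_2..e_t (tail v_k, head hs_k)
   landing in block j (loops count twice). *)
Definition degH (m t : nat) (hs : list nat) (j : nat) : nat :=
  fold_right Nat.add 0%nat
    (map (fun k => (b2n (Nat.eqb (blk m t k) j)
                    + b2n (Nat.eqb (blk m t (nth (k - 2) hs 0%nat)) j))%nat)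
         (seq 2 (t - 1))).

Definition maxdegH (m t : nat) (hs : list nat) : nat :=
  fold_right Nat.max 0%nat (map (degH m t hs) (seq 1 (ceil_div t m))).

Definition B_ind (beta : R) (m n : nat) (delta : R) (fs : list choice) : R :=
  let hs := heads fs in
  if Rle_dec (Rpower (INR n) (beta / (2 + beta) + delta))
       (sumR (map (fun i => (INR (maxdegH m (m * i) hs)
                             / Rpower (INR (m * i)) (2 / (2 + beta))) ^ 2)
                  (seq 1 n)))
  then 1 else 0.

Definition prob_B (beta : R) (m n : nat) (delta : R) : R :=
  expect beta (m * n) (B_ind beta m n delta).

(* Main.v *)
Require Import Defs.
From Stdlib Require Import Reals Lra Lia List Arith Classical.
Import ListNotations.
Open Scope R_scope.

Lemma sumR_app l1 l2 : sumR (l1 ++ l2) = sumR l1 + sumR l2.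
Proof. induction l1; simpl; [lra| rewrite IHl1; lra]. Qed.

Lemma sumR_map_plus {A} (f g : A -> R) l :
  sumR (map (fun x => f x + g x) l) = sumR (map f l) + sumR (map g l).
Proof. induction l; simpl; [lra| rewrite IHl; lra]. Qed.

Lemma sumR_map_scal {A} (c : R) (f : A -> R) l :
  sumR (map (fun x => c * f x) l) = c * sumR (map f l).
Proof. induction l; simpl; [lra| rewrite IHl; lra]. Qed.

Lemma sumR_map_ext {A} (f g : A -> R) l :
  (forall x, In x l -> f x = g x) -> sumR (map f l) = sumR (map g l).
Proof. induction l; simpl; intros H; [lra|]. rewrite H, IHl; auto. Qed.

Lemma sumR_map_le {A} (f g : A -> R) l :
  (forall x, In x l -> f x <= g x) -> sumR (map f l) <= sumR (map g l).
Proof. induction l; simpl; intros H; [lra|].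
  assert (f a <= g a) by auto. assert (sumR (map f l) <= sumR (map g l)) by auto. lra. Qed.

Lemma sumR_map_nonneg {A} (f : A -> R) l :
  (forall x, In x l -> 0 <= f x) -> 0 <= sumR (map f l).
Proof. induction l; simpl; intros H; [lra|].
  assert (0 <= f a) by auto. assert (0 <= sumR (map f l)) by auto. lra. Qed.

Lemma sumR_map_const {A} (c : R) (l : list A) :
  sumR (map (fun _ => c) l) = INR (length l) * c.
Proof. induction l; simpl length; [simpl; lra|]. rewrite S_INR. simpl. rewrite IHl. lra. Qed.

Lemma sumR_map_0 {A} (l : list A) : sumR (map (fun _ => 0) l) = 0.
Proof. rewrite sumR_map_const. lra. Qed.

Lemma sumR_map_map {A B} (f : B -> R) (g : A -> B) l :
  sumR (map f (map g l)) = sumR (map (fun x => f (g x)) l).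
Proof. rewrite map_map. reflexivity. Qed.

Lemma expect_plus beta s n fs g1 g2 :
  expect_from beta s n fs (fun x => g1 x + g2 x) =
  expect_from beta s n fs g1 + expect_from beta s n fs g2.
Proof.
  revert n fs; induction s; intros n fs; simpl; [reflexivity|].
  rewrite <- sumR_map_plus. apply sumR_map_ext. intros f _. rewrite IHs. ring.
Qed.

Lemma expect_scal beta s n fs c g :
  expect_from beta s n fs (fun x => c * g x) = c * expect_from beta s n fs g.
Proof.
  revert n fs; induction s; intros n fs; simpl; [reflexivity|].
  rewrite <- sumR_map_scal. apply sumR_map_ext. intros f _. rewrite IHs. ring.
Qed.

Lemma expect_zero beta s n fs : expect_from beta s n fs (fun _ => 0) = 0.
Proof.
  revert n fs; induction s; intros n fs; simpl; [reflexivity|].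
  transitivity (sumR (map (fun _ : choice => 0) (omega n))); [|apply sumR_map_0].
  apply sumR_map_ext. intros f _. rewrite IHs. ring.
Qed.

Lemma expect_sum {A} beta s n fs (h : A -> list choice -> R) l :
  expect_from beta s n fs (fun x => sumR (map (fun i => h i x) l)) =
  sumR (map (fun i => expect_from beta s n fs (h i)) l).
Proof.
  induction l; simpl.
  - apply expect_zero.
  - rewrite expect_plus, IHl. reflexivity.
Qed.

Lemma expect_ext beta s n fs g1 g2 :
  (forall x, g1 x = g2 x) -> expect_from beta s n fs g1 = expect_from beta s n fs g2.
Proof.
  revert n fs; induction s; intros n fs H; simpl; [auto|].
  apply sumR_map_ext. intros f _. rewrite (IHs _ _ H). reflexivity.
Qed.

Lemma heads_app fs f : heads (fs ++ [f]) = heads fs ++ [target (heads fs) f].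
Proof. unfold heads. rewrite fold_left_app. reflexivity. Qed.

Lemma heads_length fs : length (heads fs) = length fs.
Proof.
  induction fs as [|f fs IH] using rev_ind; [reflexivity|].
  rewrite heads_app, !length_app, IH. reflexivity.
Qed.

Definition hok (hs : list nat) := forall j, (j < length hs)%nat -> (nth j hs 0 <= j + 1)%nat.

Definition valid (n : nat) (fs : list choice) :=
  (1 <= n)%nat /\ length fs = (n - 1)%nat /\ hok (heads fs).

Lemma in_omega n f : In f (omega n) ->
  match f with CV i => (1 <= i <= n)%nat | CH i => (2 <= i <= n)%nat | CT i => (2 <= i <= n)%nat end.
Proof.
  unfold omega. rewrite !in_app_iff, !in_map_iff.
  intros [[i [<- Hi]]|[[i [<- Hi]]|[i [<- Hi]]]]; apply in_seq in Hi; lia.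
Qed.

Lemma target_le hs f n : hok hs -> length hs = (n - 1)%nat -> (1 <= n)%nat -> In f (omega n) ->
  (target hs f <= n)%nat.
Proof.
  intros Hh Hl Hn Hf. apply in_omega in Hf. destruct f; simpl; try lia.
  assert (i - 2 < length hs)%nat by lia. specialize (Hh _ H). lia.
Qed.

Lemma valid_step n fs f : valid n fs -> In f (omega n) -> valid (S n) (fs ++ [f]).
Proof.
  intros [Hn [Hl Hh]] Hf. split; [lia|]. split.
  - rewrite length_app. simpl. lia.
  - rewrite heads_app. intros j Hj. rewrite length_app in Hj. simpl in Hj.
    rewrite heads_length in Hj.
    destruct (Nat.lt_ge_cases j (length (heads fs))).
    + rewrite app_nth1 by auto. auto.
    + rewrite heads_length in H. assert (j = length fs) by lia. subst j.
      rewrite app_nth2 by (rewrite heads_length; lia). rewrite heads_length, Nat.sub_diag. simpl.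
      pose proof (target_le (heads fs) f n Hh ltac:(rewrite heads_length; auto) Hn Hf). lia.
Qed.

Lemma pw_nonneg beta n f : 0 < beta -> (1 <= n)%nat -> 0 <= pw beta n f.
Proof.
  intros Hb Hn. assert (1 <= INR n) by (apply (le_INR 1); auto).
  assert (0 < (2 + beta) * INR n - 2) by nra.
  destruct f; simpl; unfold Rdiv; apply Rmult_le_pos; try lra; left; apply Rinv_0_lt_compat; auto.
Qed.

Lemma expect_mono beta s n fs g1 g2 : 0 < beta -> valid n fs ->
  (forall x, valid (n + s) x -> g1 x <= g2 x) ->
  expect_from beta s n fs g1 <= expect_from beta s n fs g2.
Proof.
  intros Hb. revert n fs; induction s; intros n fs Hv H; simpl.
  - apply H. rewrite Nat.add_0_r. auto.
  - apply sumR_map_le. intros f Hf. apply Rmult_le_compat_l.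
    + apply pw_nonneg; auto. destruct Hv; auto.
    + apply IHs. apply valid_step; auto. intros x Hx. apply H. replace (n + S s)%nat with (S n + s)%nat by lia. auto.
Qed.

Lemma expect_super beta s n fs g (F : nat -> list choice -> R) : 0 < beta -> valid n fs ->
  (forall x, valid (n + s) x -> g x <= F (n + s)%nat x) ->
  (forall k x, (n <= k)%nat -> valid k x ->
     sumR (map (fun f => pw beta k f * F (S k) (x ++ [f])) (omega k)) <= F k x) ->
  expect_from beta s n fs g <= F n fs.
Proof.
  intros Hb. revert n fs; induction s; intros n fs Hv Hg HF; simpl.
  - rewrite Nat.add_0_r in Hg. auto.
  - eapply Rle_trans; [|apply (HF n fs (le_n _) Hv)].
    apply sumR_map_le. intros f Hf. apply Rmult_le_compat_l.
    + apply pw_nonneg; auto. destruct Hv; auto.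
    + apply IHs. apply valid_step; auto.
      * intros x Hx. replace (S n + s)%nat with (n + S s)%nat by lia. apply Hg.
        replace (n + S s)%nat with (S n + s)%nat by lia. auto.
      * intros k x Hk Hx. apply HF; auto. lia.
Qed.


Definition nsum (l : list nat) : nat := fold_right Nat.add 0%nat l.

Lemma nsum_app l1 l2 : nsum (l1 ++ l2) = (nsum l1 + nsum l2)%nat.
Proof. induction l1; simpl; [auto| rewrite IHl1; lia]. Qed.

Lemma INR_nsum {A} (g : A -> nat) l : INR (nsum (map g l)) = sumR (map (fun x => INR (g x)) l).
Proof. induction l; simpl; [auto| rewrite plus_INR, IHl; auto]. Qed.

Lemma count_seq a len v : nsum (map (fun i => b2n (i =? v)) (seq a len)) =
  if ((a <=? v) && (v <? a + len))%bool then 1%nat else 0%nat.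
Proof.
  revert a; induction len; intros a; simpl.
  - destruct (a <=? v) eqn:E1; destruct (v <? a + 0) eqn:E2; simpl; auto.
    apply Nat.leb_le in E1; apply Nat.ltb_lt in E2; lia.
  - rewrite IHlen. destruct (a =? v) eqn:E;
      destruct (S a <=? v) eqn:E1; destruct (v <? S a + len) eqn:E2;
      destruct (a <=? v) eqn:E3; destruct (v <? a + S len) eqn:E4; simpl; auto;
      repeat match goal with H : (_ <=? _) = true |- _ => apply Nat.leb_le in H
        | H : (_ <=? _) = false |- _ => apply Nat.leb_gt in H
        | H : (_ <? _) = true |- _ => apply Nat.ltb_lt in H
        | H : (_ <? _) = false |- _ => apply Nat.ltb_ge in H
        | H : (_ =? _) = true |- _ => apply Nat.eqb_eq in H
        | H : (_ =? _) = false |- _ => apply Nat.eqb_neq in H end; lia.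
Qed.

Definition dv (t v : nat) (hs : list nat) : nat :=
  nsum (map (fun k => b2n (k =? v) + b2n (nth (k - 2) hs 0 =? v))%nat (seq 2 (t - 1))).

Definition Dn (beta : R) (n : nat) := (2 + beta) * INR n - 2.

Lemma Dn_pos beta n : 0 < beta -> (1 <= n)%nat -> 0 < Dn beta n.
Proof. intros. unfold Dn. assert (1 <= INR n) by (apply (le_INR 1); auto). nra. Qed.

Lemma omega_sum (n : nat) (h : choice -> R) :
  sumR (map h (omega n)) = sumR (map (fun i => h (CV i)) (seq 1 n))
    + sumR (map (fun i => h (CH i)) (seq 2 (n - 1)))
    + sumR (map (fun i => h (CT i)) (seq 2 (n - 1))).
Proof. unfold omega. rewrite !map_app, !sumR_app, !map_map. ring. Qed.

Lemma pw_sum beta n c : 0 < beta -> (1 <= n)%nat ->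
  sumR (map (fun f => pw beta n f * c) (omega n)) = c.
Proof.
  intros Hb Hn. rewrite omega_sum. simpl pw.
  rewrite !sumR_map_const, !length_seq. rewrite minus_INR by auto. simpl INR.
  pose proof (Dn_pos beta n Hb Hn). unfold Dn in H. field. lra.
Qed.

Lemma sumR_b2n_scal {A} c (g : A -> bool) l :
  sumR (map (fun x => c * INR (b2n (g x))) l) = c * INR (nsum (map (fun x => b2n (g x)) l)).
Proof. rewrite sumR_map_scal, INR_nsum. reflexivity. Qed.

Lemma prob_target beta n hs v : 0 < beta -> (1 <= v <= n)%nat -> length hs = (n - 1)%nat ->
  sumR (map (fun f => pw beta n f * INR (b2n (target hs f =? v))) (omega n)) =
  (beta + INR (dv n v hs)) / Dn beta n.
Proof.
  intros Hb Hv Hl. rewrite omega_sum. simpl pw. simpl target.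
  rewrite !sumR_b2n_scal, !count_seq.
  destruct (1 <=? v) eqn:E1; [|apply Nat.leb_gt in E1; lia].
  destruct (v <? 1 + n) eqn:E2; [|apply Nat.ltb_ge in E2; lia]. simpl.
  assert (Hd : INR (dv n v hs) = INR (nsum (map (fun x => b2n (x =? v)) (seq 2 (n - 1))))
     + INR (nsum (map (fun x => b2n (nth (x - 2) hs 0%nat =? v)) (seq 2 (n - 1))))).
  { unfold dv. rewrite <- plus_INR. f_equal. generalize (seq 2 (n - 1)). induction l; simpl; auto.
    rewrite IHl. lia. }
  rewrite Hd, count_seq. simpl.
  destruct (2 <=? v) eqn:E3; destruct (v <? 2 + (n - 1)) eqn:E4; simpl;
  unfold Dn, Rdiv; ring.
Qed.

Lemma dv_step n v hs x : (1 <= n)%nat -> length hs = (n - 1)%nat ->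
  dv (S n) v (hs ++ [x]) = (dv n v hs + b2n (S n =? v) + b2n (x =? v))%nat.
Proof.
  intros Hn Hl. unfold dv.
  replace (S n - 1)%nat with (S (n - 1)) by lia. rewrite seq_S, map_app, nsum_app.
  replace (2 + (n - 1))%nat with (S n) by lia.
  assert (E : nth (S n - 2) (hs ++ [x]) 0%nat = x).
  { replace (S n - 2)%nat with (length hs) by lia. apply nth_middle. }
  assert (E2 : nsum (map (fun k => b2n (k =? v) + b2n (nth (k - 2) (hs ++ [x]) 0 =? v))%nat [S n])
     = (b2n (S n =? v) + b2n (x =? v))%nat).
  { cbn [map nsum fold_right]. rewrite E. lia. }
  rewrite E2.
  assert (E3 : map (fun k => b2n (k =? v) + b2n (nth (k - 2) (hs ++ [x]) 0 =? v))%nat (seq 2 (n - 1))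
   = map (fun k => b2n (k =? v) + b2n (nth (k - 2) hs 0 =? v))%nat (seq 2 (n - 1))).
  { apply map_ext_in. intros k Hk. apply in_seq in Hk. rewrite app_nth1 by lia. reflexivity. }
  rewrite E3. lia.
Qed.

Lemma dv_app_ge t n v hs x : (t <= n)%nat -> length hs = (n - 1)%nat ->
  dv t v (hs ++ [x]) = dv t v hs.
Proof.
  intros Ht Hl. unfold dv. f_equal. apply map_ext_in. intros k Hk. apply in_seq in Hk.
  rewrite app_nth1 by lia. reflexivity.
Qed.

Lemma dv_zero_gt n v hs : hok hs -> length hs = (n - 1)%nat -> (n < v)%nat -> dv n v hs = 0%nat.
Proof.
  intros Hh Hl Hv. unfold dv.
  assert (forall l, (forall k, In k l -> 2 <= k <= n)%nat ->
     nsum (map (fun k => b2n (k =? v) + b2n (nth (k - 2) hs 0 =? v))%nat l) = 0%nat).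
  { induction l; simpl; auto. intros H. rewrite IHl by auto.
    assert (2 <= a <= n)%nat by auto.
    assert (nth (a - 2) hs 0%nat <= a - 1)%nat by (specialize (Hh (a-2)%nat ltac:(lia)); lia).
    destruct (a =? v) eqn:E1; [apply Nat.eqb_eq in E1; lia|].
    destruct (nth (a - 2) hs 0%nat =? v) eqn:E2; [apply Nat.eqb_eq in E2; lia|]. simpl. auto. }
  apply H. intros k Hk. apply in_seq in Hk. lia.
Qed.


Lemma div_nonneg a b : 0 <= a -> 0 < b -> 0 <= a / b.
Proof. intros. unfold Rdiv. apply Rmult_le_pos; [lra| left; apply Rinv_0_lt_compat; lra]. Qed.

Fixpoint rise (K : nat) (x : R) : R :=
  match K with O => 1 | S K' => rise K' x * (x + INR K') end.

Lemma rise_pos K x : 0 < x -> 0 < rise K x.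
Proof. intros. induction K; simpl; [lra|]. apply Rmult_lt_0_compat; auto. pose proof (pos_INR K); lra. Qed.

Lemma rise_shift K x : rise K (x + 1) * x = rise K x * (x + INR K).
Proof. induction K; cbn [rise]; [simpl; ring|]. rewrite S_INR.
  replace (rise K (x + 1) * (x + 1 + INR K) * x) with (rise K (x + 1) * x * (x + 1 + INR K)) by ring.
  rewrite IHK. ring. Qed.

Lemma rise_mono K x y : 0 <= x <= y -> rise K x <= rise K y.
Proof. intros H. induction K; simpl; [lra|]. pose proof (pos_INR K).
  assert (0 <= rise K x). { clear IHK. induction K; simpl; [lra|]. pose proof (pos_INR K). apply Rmult_le_pos; [apply IHK; auto|lra]. }
  apply Rmult_le_compat; lra. Qed.

Lemma pow_le_rise K x b : 0 <= x -> 0 <= b -> x ^ K <= rise K (x + b).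
Proof. intros. induction K; simpl; [lra|]. pose proof (pos_INR K).
  rewrite Rmult_comm. apply Rmult_le_compat; try lra. apply pow_le; auto. Qed.

Fixpoint Pq (beta : R) (K : nat) (t : nat) : R :=
  match t with O => 1 | S t' => match t' with O => 1 | _ => Pq beta K t' * (1 + INR K / Dn beta t') end end.

Lemma Pq_S beta K n : (1 <= n)%nat -> Pq beta K (S n) = Pq beta K n * (1 + INR K / Dn beta n).
Proof. intros. destruct n; [lia|]. reflexivity. Qed.

Lemma Pq_pos beta K n : 0 < beta -> 0 < Pq beta K n.
Proof. intros Hb. induction n as [|n IH]; [simpl; lra|]. destruct n; [simpl; lra|].
  rewrite Pq_S by lia. apply Rmult_lt_0_compat; auto.
  pose proof (Dn_pos beta (S n) Hb ltac:(lia)). pose proof (pos_INR K).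
  assert (0 <= INR K / Dn beta (S n)) by (apply div_nonneg; lra). lra. Qed.

Lemma Pq_le_S beta K n : 0 < beta -> (1 <= n)%nat -> Pq beta K n <= Pq beta K (S n).
Proof. intros Hb Hn. rewrite Pq_S by auto. pose proof (Pq_pos beta K n Hb).
  pose proof (Dn_pos beta n Hb Hn). pose proof (pos_INR K).
  assert (0 <= INR K / Dn beta n) by (apply div_nonneg; lra). nra. Qed.

Definition Fm (beta : R) (K t v : nat) (n : nat) (fs : list choice) : R :=
  rise K (INR (dv (Nat.min n t) v (heads fs)) + beta + INR (b2n (Nat.min n t <? v)))
  / Pq beta K (Nat.min n t).

Lemma rise_b2n (K : nat) X (b : bool) : rise K (X + INR (b2n b)) = rise K X + INR (b2n b) * (rise K (X + 1) - rise K X).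
Proof. destruct b; cbn [b2n INR]; [ring|]. rewrite Rplus_0_r. ring. Qed.

Lemma Fm_step (beta : R) (K t v : nat) (Hb : 0 < beta) (Ht : (1 <= t)%nat) (Hv : (1 <= v)%nat)
  k x : (1 <= k)%nat -> valid k x ->
  sumR (map (fun f => pw beta k f * Fm beta K t v (S k) (x ++ [f])) (omega k)) <= Fm beta K t v k x.
Proof.
  intros Hk [_ [Hl Hh]].
  assert (Hlh : length (heads x) = (k - 1)%nat) by (rewrite heads_length; auto).
  destruct (Nat.le_gt_cases t k) as [Htk|Htk].
  - rewrite (sumR_map_ext _ (fun f => pw beta k f * Fm beta K t v k x)).
    + rewrite pw_sum; auto; lra.
    + intros f Hf. unfold Fm. replace (Nat.min (S k) t) with t by lia.
      replace (Nat.min k t) with t by lia. rewrite heads_app. rewrite (dv_app_ge t k) by auto.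
      reflexivity.
  - unfold Fm at 2. replace (Nat.min k t) with k by lia.
    assert (HD := Dn_pos beta k Hb Hk). assert (HP := Pq_pos beta K k Hb).
    assert (HP1 := Pq_S beta K k Hk). pose proof (pos_INR K).
    destruct (Nat.lt_ge_cases k v) as [Hkv|Hkv].
    + rewrite (sumR_map_ext _ (fun f => pw beta k f * (rise K (1 + beta) / Pq beta K (S k)))).
      * rewrite pw_sum by auto. rewrite (dv_zero_gt k v) by auto.
        assert ((k <? v) = true) by (apply Nat.ltb_lt; auto). rewrite H0. simpl INR.
        replace (0 + beta + 1) with (1 + beta) by ring.
        unfold Rdiv. apply Rmult_le_compat_l. { left; apply rise_pos; lra. }
        apply Rinv_le_contravar; auto. apply Pq_le_S; auto.
      * intros f Hf. unfold Fm. replace (Nat.min (S k) t) with (S k) by lia.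
        rewrite heads_app, dv_step by auto. rewrite (dv_zero_gt k v) by auto.
        pose proof (target_le (heads x) f k Hh Hlh Hk Hf).
        assert ((target (heads x) f =? v) = false) by (apply Nat.eqb_neq; lia).
        rewrite H1. f_equal. f_equal. f_equal.
        destruct (S k =? v) eqn:E1; destruct (S k <? v) eqn:E2;
        repeat match goal with H : (_ <? _) = true |- _ => apply Nat.ltb_lt in H
        | H : (_ <? _) = false |- _ => apply Nat.ltb_ge in H
        | H : (_ =? _) = true |- _ => apply Nat.eqb_eq in H
        | H : (_ =? _) = false |- _ => apply Nat.eqb_neq in H end; simpl; try lia; lra.
    + set (X := INR (dv k v (heads x)) + beta).
      assert (HX : 0 < X) by (unfold X; pose proof (pos_INR (dv k v (heads x))); lra).
      rewrite (sumR_map_ext _ (fun f => pw beta k f * (rise K X / Pq beta K (S k))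
            + (rise K (X + 1) - rise K X) / Pq beta K (S k) *
              (pw beta k f * INR (b2n (target (heads x) f =? v))))).
      * rewrite sumR_map_plus, sumR_map_scal, pw_sum by auto.
        rewrite prob_target by (auto; lia).
        assert ((k <? v) = false) by (apply Nat.ltb_ge; auto). rewrite H0. simpl INR.
        rewrite Rplus_0_r. fold X. rewrite HP1.
        assert (E : (rise K (X + 1) - rise K X) * X = rise K X * INR K)
          by (rewrite Rmult_minus_distr_r, rise_shift; ring).
        replace (beta + INR (dv k v (heads x))) with X by (unfold X; ring).
        apply Req_le. field_simplify_eq.
        2:{ split; [lra|]. split; lra. }
        rewrite <- E. ring.
      * intros f Hf. unfold Fm. replace (Nat.min (S k) t) with (S k) by lia.
        rewrite heads_app, dv_step by auto.
        assert ((S k =? v) = false) by (apply Nat.eqb_neq; lia).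
        assert ((S k <? v) = false) by (apply Nat.ltb_ge; lia).
        rewrite H0, H1. simpl b2n. rewrite !plus_INR. simpl INR.
        replace (INR (dv k v (heads x)) + 0 + INR (b2n (target (heads x) f =? v)) + beta + 0)
          with (X + INR (b2n (target (heads x) f =? v))) by (unfold X; ring).
        rewrite rise_b2n. pose proof (Pq_pos beta K (S k) Hb). field. lra.
Qed.

Lemma deg_moment (beta : R) (K t v : nat) (Hb : 0 < beta) (Ht : (1 <= t)%nat) (Hv : (1 <= v)%nat)
  N : (t <= N)%nat ->
  expect beta N (fun fs => rise K (INR (dv t v (heads fs)) + beta)) <= Pq beta K t * rise K (1 + beta).
Proof.
  intros HN. unfold expect.
  apply Rle_trans with (Pq beta K t * Fm beta K t v 1 []).
  - apply (expect_super beta (N - 1) 1 [] _ (fun n x => Pq beta K t * Fm beta K t v n x)); auto.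
    + split; [lia|]. split; [reflexivity|]. intros j Hj. simpl in Hj. lia.
    + intros x Hx. unfold Fm. replace (Nat.min (1 + (N - 1)) t) with t by lia.
      pose proof (Pq_pos beta K t Hb). field_simplify; [|lra].
      apply rise_mono. pose proof (pos_INR (dv t v (heads x))). pose proof (pos_INR (b2n (t <? v))). lra.
    + intros k x Hk Hx. rewrite sumR_map_ext with (g := fun f => Pq beta K t * (pw beta k f * Fm beta K t v (S k) (x ++ [f])))
        by (intros; ring).
      rewrite sumR_map_scal. apply Rmult_le_compat_l. { left; apply Pq_pos; auto. }
      apply Fm_step; auto.
  - apply Rmult_le_compat_l. { left; apply Pq_pos; auto. }
    unfold Fm. replace (Nat.min 1 t) with 1%nat by lia. simpl Pq.
    replace (dv 1 v (heads [])) with 0%nat by reflexivity. simpl INR.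
    rewrite Rdiv_1_r. apply rise_mono. destruct (1 <? v); simpl; lra.
Qed.


Lemma count_seq' a len x : nsum (map (fun v => b2n (x =? v)) (seq a len)) =
  if ((a <=? x) && (x <? a + len))%bool then 1%nat else 0%nat.
Proof. rewrite <- count_seq. f_equal. apply map_ext. intros. rewrite Nat.eqb_sym. auto. Qed.

Lemma nsum_plus {A} (f g : A -> nat) l :
  nsum (map (fun x => f x + g x)%nat l) = (nsum (map f l) + nsum (map g l))%nat.
Proof. induction l; simpl; auto. rewrite IHl. lia. Qed.

Lemma nsum_exchange {A B} (f : A -> B -> nat) l1 l2 :
  nsum (map (fun a => nsum (map (fun b => f a b) l2)) l1) =
  nsum (map (fun b => nsum (map (fun a => f a b) l1)) l2).
Proof.
  induction l1; simpl.
  - induction l2; simpl; auto.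
  - rewrite IHl1. rewrite nsum_plus. reflexivity.
Qed.

Lemma nsum_le {A} (f g : A -> nat) l : (forall x, In x l -> f x <= g x)%nat ->
  (nsum (map f l) <= nsum (map g l))%nat.
Proof. induction l; simpl; intros H; [lia|]. pose proof (H a (or_introl eq_refl)).
  assert (nsum (map f l) <= nsum (map g l))%nat by (apply IHl; intros; apply H; right; auto). lia. Qed.

Lemma nsum_le_const {A} (f : A -> nat) l c : (forall x, In x l -> f x <= c)%nat ->
  (nsum (map f l) <= length l * c)%nat.
Proof. induction l; simpl; intros H; [lia|]. pose proof (H a (or_introl eq_refl)).
  assert (nsum (map f l) <= length l * c)%nat by (apply IHl; intros; apply H; right; auto). lia. Qed.

Lemma blk_range m t x j : (1 <= m)%nat -> (1 <= j)%nat -> (x <= t)%nat -> blk m t x = j ->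
  ((j - 1) * m + 1 <= x < (j - 1) * m + 1 + m)%nat.
Proof.
  intros Hm Hj Hx Hb. unfold blk, ceil_div in Hb.
  assert ((x + m - 1) / m <= (t + m - 1) / m)%nat by (apply Nat.div_le_mono; lia).
  rewrite Nat.min_l in Hb by auto.
  pose proof (Nat.div_mod_eq (x + m - 1) m). pose proof (Nat.mod_upper_bound (x + m - 1) m ltac:(lia)).
  rewrite Hb in H0. nia.
Qed.

Lemma b2n_blk_le m t x j : (1 <= m)%nat -> (1 <= j)%nat -> (x <= t)%nat ->
  (b2n (blk m t x =? j) <= nsum (map (fun v => b2n (x =? v)) (seq ((j - 1) * m + 1) m)))%nat.
Proof.
  intros Hm Hj Hx. destruct (blk m t x =? j) eqn:E; simpl; [|lia].
  apply Nat.eqb_eq in E. apply blk_range in E; auto. rewrite count_seq'.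
  destruct ((j - 1) * m + 1 <=? x) eqn:E1; [|apply Nat.leb_gt in E1; lia].
  destruct (x <? (j - 1) * m + 1 + m) eqn:E2; [|apply Nat.ltb_ge in E2; lia]. simpl. lia.
Qed.

Definition hbound (t : nat) (hs : list nat) := forall k, (2 <= k <= t)%nat -> (nth (k - 2) hs 0 <= t)%nat.

Lemma degH_le m t hs j : (1 <= m)%nat -> (1 <= j)%nat -> hbound t hs ->
  (degH m t hs j <= nsum (map (fun v => dv t v hs) (seq ((j - 1) * m + 1) m)))%nat.
Proof.
  intros Hm Hj Hh. unfold degH, dv.
  rewrite (nsum_exchange (fun v k => b2n (k =? v) + b2n (nth (k - 2) hs 0 =? v))%nat).
  apply nsum_le. intros k Hk. apply in_seq in Hk. rewrite nsum_plus.
  apply Nat.add_le_mono; apply b2n_blk_le; auto; try lia. apply Hh. lia.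
Qed.

Definition nmax (l : list nat) := fold_right Nat.max 0%nat l.

Lemma nmax_ge l x : In x l -> (x <= nmax l)%nat.
Proof. induction l; simpl; intros H; [easy|]. destruct H; subst; [lia|]. specialize (IHl H). lia. Qed.

Lemma nmax_le l c : (forall x, In x l -> x <= c)%nat -> (nmax l <= c)%nat.
Proof. induction l; simpl; intros H; [lia|]. apply Nat.max_lub; auto. Qed.

Lemma maxdegH_le m t hs : (1 <= m)%nat -> hbound t hs ->
  (maxdegH m t hs <= m * nmax (map (fun v => dv t v hs) (seq 1 (t + m))))%nat.
Proof.
  intros Hm Hh. unfold maxdegH. apply nmax_le. intros d Hd. apply in_map_iff in Hd.
  destruct Hd as [j [<- Hj]]. apply in_seq in Hj.
  eapply Nat.le_trans; [apply degH_le; auto; lia|].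
  eapply Nat.le_trans; [apply nsum_le_const with (c := nmax (map (fun v => dv t v hs) (seq 1 (t + m))))|
    rewrite length_seq; lia].
  intros v Hv. apply nmax_ge. apply (in_map (fun v => dv t v hs)). apply in_seq in Hv.
  apply in_seq. unfold ceil_div in Hj.
  assert (m * ((t + m - 1) / m) <= t + m - 1)%nat by (apply Nat.mul_div_le; lia).
  nia.
Qed.

Lemma pow_nmax_le (l : list nat) K :
  (INR (nmax l)) ^ K <= sumR (map (fun x => INR x ^ K) l) + (if K then 1 else 0).
Proof.
  induction l.
  - destruct K; simpl; lra.
  - change (nmax (a :: l)) with (Nat.max a (nmax l)).
    change (sumR (map (fun x => INR x ^ K) (a :: l))) with (INR a ^ K + sumR (map (fun x => INR x ^ K) l)).
    assert (0 <= INR a ^ K) by (apply pow_le, pos_INR).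
    destruct (Nat.le_ge_cases a (nmax l)).
    + rewrite Nat.max_r by auto. lra.
    + rewrite Nat.max_l by auto.
      assert (0 <= sumR (map (fun x => INR x ^ K) l)) by (apply sumR_map_nonneg; intros; apply pow_le, pos_INR).
      destruct K; simpl in *; lra.
Qed.


Lemma valid_hbound N fs t : valid N fs -> (t <= N)%nat -> hbound t (heads fs).
Proof.
  intros [Hn [Hl Hh]] Ht k Hk. assert (k - 2 < length (heads fs))%nat by (rewrite heads_length; lia).
  specialize (Hh _ H). lia.
Qed.

Lemma sumR_le_const {A} (f : A -> R) l c : (forall x, In x l -> f x <= c) ->
  sumR (map f l) <= INR (length l) * c.
Proof. rewrite <- sumR_map_const. apply sumR_map_le. Qed.

Lemma Hmoment beta m t N K : 0 < beta -> (1 <= m)%nat -> (1 <= t <= N)%nat -> (1 <= K)%nat ->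
  expect beta N (fun fs => INR (maxdegH m t (heads fs)) ^ K) <=
  INR m ^ K * (INR (t + m) * (Pq beta K t * rise K (1 + beta))).
Proof.
  intros Hb Hm Ht HK. unfold expect.
  apply Rle_trans with (expect_from beta (N - 1) 1 []
     (fun fs => INR m ^ K * sumR (map (fun v => rise K (INR (dv t v (heads fs)) + beta)) (seq 1 (t + m))))).
  - apply expect_mono; auto.
    { split; [lia|]. split; [reflexivity|]. intros j Hj. simpl in Hj. lia. }
    intros x Hx. replace (1 + (N - 1))%nat with N in Hx by lia.
    pose proof (maxdegH_le m t (heads x) Hm (valid_hbound N x t Hx ltac:(lia))).
    set (D := nmax (map (fun v => dv t v (heads x)) (seq 1 (t + m)))) in *.
    apply Rle_trans with (INR (m * D) ^ K).
    { apply pow_incr. split; [apply pos_INR| apply le_INR; auto]. }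
    rewrite mult_INR, Rpow_mult_distr. apply Rmult_le_compat_l. { apply pow_le, pos_INR. }
    eapply Rle_trans; [apply pow_nmax_le|]. destruct K; [lia|]. rewrite Rplus_0_r.
    rewrite map_map. apply sumR_map_le. intros v _. apply pow_le_rise; [apply pos_INR| lra].
  - rewrite expect_scal. apply Rmult_le_compat_l. { apply pow_le, pos_INR. }
    rewrite expect_sum. eapply Rle_trans; [apply sumR_le_const|rewrite length_seq; apply Rle_refl].
    intros v Hv. apply in_seq in Hv. apply deg_moment; auto; lia.
Qed.

Lemma ln_le' x y : 0 < x -> x <= y -> ln x <= ln y.
Proof. intros Hx [H|H]; [left; apply ln_increasing; auto| subst; lra]. Qed.

Lemma ln_1_plus_inv j : 0 < j -> / (j + 1) <= ln (1 + / j).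
Proof.
  intros Hj.
  assert (H1 : 1 - / (j + 1) <= exp (- / (j + 1))) by (pose proof (exp_ineq1_le (- / (j + 1))); lra).
  assert (Hp : 0 < 1 - / (j + 1)).
  { assert (/ (j + 1) < 1). { rewrite <- Rinv_1. apply Rinv_lt_contravar; lra. } lra. }
  pose proof (ln_le' _ _ Hp H1). rewrite ln_exp in H.
  replace (1 + / j) with (/ (1 - / (j + 1))).
  - rewrite ln_Rinv by auto. lra.
  - field. split; lra.
Qed.

Lemma Rpower_ge_lin x a : 0 < x -> 0 <= a -> 1 + a * ln x <= Rpower x a.
Proof. intros. unfold Rpower. pose proof (exp_ineq1_le (a * ln x)). lra. Qed.

Lemma Pq_mono beta K n p : 0 < beta -> (1 <= n <= p)%nat -> Pq beta K n <= Pq beta K p.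
Proof.
  intros Hb [Hn Hp]. induction Hp; [lra|]. eapply Rle_trans; [apply IHHp|]. apply Pq_le_S; auto. lia.
Qed.

Lemma frac_le a b c d : 0 < b -> 0 < d -> a * d <= c * b -> a / b <= c / d.
Proof.
  intros Hb Hd H. apply Rmult_le_reg_r with (b * d); [nra|].
  replace (a / b * (b * d)) with (a * d) by (field; lra).
  replace (c / d * (b * d)) with (c * b) by (field; lra). auto.
Qed.

Lemma Pq_bound beta K eta : 0 < beta -> 0 < eta ->
  exists C, 0 < C /\ forall t, (1 <= t)%nat ->
    Pq beta K t <= C * Rpower (INR t) (INR K * (1 + eta) / (2 + beta)).
Proof.
  intros Hb He. set (a := INR K * (1 + eta) / (2 + beta)).
  assert (Ha : 0 <= a) by (unfold a; apply div_nonneg; [pose proof (pos_INR K); nra| lra]).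
  destruct (INR_unbounded ((2 + beta + 2 * (1 + eta)) / (eta * (2 + beta)))) as [J0 HJ0].
  set (J := S J0).
  assert (HJ : (1 <= J)%nat) by (unfold J; lia).
  assert (HJr : INR J0 <= INR J) by (apply le_INR; unfold J; lia).
  assert (Hstep : forall j, (J <= j)%nat -> 1 + INR K / Dn beta j <= Rpower (1 + / INR j) a).
  { intros j Hj. assert (HjJ : INR J <= INR j) by (apply le_INR; auto).
    assert (Hj0 : 0 < INR j) by (apply lt_0_INR; lia).
    eapply Rle_trans; [|apply Rpower_ge_lin; [|auto]].
    2:{ assert (0 < / INR j) by (apply Rinv_0_lt_compat; auto). lra. }
    eapply Rle_trans; [|apply Rplus_le_compat_l; apply Rmult_le_compat_l; [exact Ha| apply ln_1_plus_inv; exact Hj0]].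
    apply Rplus_le_compat_l.
    assert (HD := Dn_pos beta j Hb ltac:(lia)).
    unfold a, Dn in *. pose proof (pos_INR K).
    assert (Hjj : (2 + beta + 2 * (1 + eta)) <= eta * (2 + beta) * INR j).
    { assert ((2 + beta + 2 * (1 + eta)) / (eta * (2 + beta)) < INR j) by lra.
      assert (0 < eta * (2 + beta)) by nra.
      apply Rmult_lt_compat_l with (r := eta * (2 + beta)) in H0; auto.
      unfold Rdiv in H0. rewrite <- Rmult_assoc, (Rmult_comm _ (2 + beta + _)), Rmult_assoc, Rinv_r in H0 by lra.
      lra. }
    replace (INR K * (1 + eta) / (2 + beta) * / (INR j + 1)) with (INR K * ((1 + eta) / ((2 + beta) * (INR j + 1))))
      by (field; lra).
    unfold Rdiv at 1. apply Rmult_le_compat_l; auto.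
    rewrite <- (Rmult_1_l (/ _)). apply frac_le; [lra| nra|]. nra. }
  assert (Hind : forall t, (J <= t)%nat -> Pq beta K t <= Pq beta K J * Rpower (INR t / INR J) a).
  { intros t Ht. induction Ht.
    - unfold Rdiv. rewrite Rinv_r by (apply not_0_INR; lia). unfold Rpower. rewrite ln_1, Rmult_0_r, exp_0. lra.
    - rewrite Pq_S by lia. eapply Rle_trans.
      + apply Rmult_le_compat; [left; apply Pq_pos; auto| |exact IHHt| apply (Hstep m); auto].
        pose proof (Dn_pos beta m Hb ltac:(lia)). pose proof (pos_INR K).
        assert (0 <= INR K / Dn beta m) by (apply div_nonneg; lra). lra.
      + rewrite Rmult_assoc. apply Rmult_le_compat_l; [left; apply Pq_pos; auto|].
        assert (0 < INR m) by (apply lt_0_INR; lia). assert (0 < INR J) by (apply lt_0_INR; lia).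
        rewrite Rpower_mult_distr; [| apply Rdiv_lt_0_compat; auto| pose proof (Rinv_0_lt_compat _ H); lra].
        right. f_equal. rewrite S_INR. field. lra. }
  exists (Pq beta K J). split; [apply Pq_pos; auto|].
  intros t Ht. assert (Ht0 : 1 <= INR t) by (apply (le_INR 1); auto).
  assert (H1 : 1 <= Rpower (INR t) a).
  { rewrite <- (Rpower_O (INR t)) by lra. apply Rle_Rpower; auto. }
  destruct (Nat.le_gt_cases J t) as [HtJ|HtJ].
  - eapply Rle_trans; [apply Hind; auto|]. apply Rmult_le_compat_l; [left; apply Pq_pos; auto|].
    apply Rle_Rpower_l; auto. assert (0 < INR J) by (apply lt_0_INR; lia).
    assert (1 <= INR J) by (apply (le_INR 1); auto).
    split; [apply Rdiv_lt_0_compat; lra|].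
    unfold Rdiv. rewrite <- (Rmult_1_r (INR t)) at 2. apply Rmult_le_compat_l; [lra|].
    rewrite <- Rinv_1. apply Rinv_le_contravar; lra.
  - eapply Rle_trans; [apply (Pq_mono beta K t J); auto; lia|].
    pose proof (Pq_pos beta K J Hb). nra.
Qed.


Lemma Rpower_pos x y : 0 < Rpower x y.
Proof. unfold Rpower. apply exp_pos. Qed.

Lemma Rpower_one y : Rpower 1 y = 1.
Proof. unfold Rpower. rewrite ln_1, Rmult_0_r, exp_0. auto. Qed.

Lemma exp_le' x y : x <= y -> exp x <= exp y.
Proof. intros [H|H]; [left; apply exp_increasing; auto| subst; lra]. Qed.

Lemma W_step x p : 2 <= x -> 0 < p < 1 ->
  Rpower x (- p) <= 2 / (1 - p) * (Rpower x (1 - p) - Rpower (x - 1) (1 - p)).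
Proof.
  intros Hx Hp. set (q := 1 - p). set (u := / x).
  assert (Hu : 0 < u <= / 2) by (unfold u; split; [apply Rinv_0_lt_compat; lra| apply Rinv_le_contravar; lra]).
  assert (Hq : 0 < q < 1) by (unfold q; lra).
  assert (E1 : x - 1 = x * (1 - u)) by (unfold u; field; lra).
  rewrite E1, <- Rpower_mult_distr by lra.
  assert (Hl : ln (1 - u) <= - u).
  { pose proof (exp_ineq1_le (- u)). pose proof (ln_le' (1 - u) (exp (- u)) ltac:(lra) ltac:(lra)).
    rewrite ln_exp in H0. auto. }
  assert (H2 : Rpower (1 - u) q <= / (1 + q * u)).
  { unfold Rpower. apply Rle_trans with (exp (- (q * u))).
    - apply exp_le'. nra.
    - rewrite exp_Ropp. apply Rinv_le_contravar; [nra|]. apply exp_ineq1_le. }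
  assert (E2 : Rpower x (- p) = Rpower x q * u).
  { unfold u. rewrite <- (Rpower_1 x) at 3 by lra. rewrite <- Rpower_Ropp, <- Rpower_plus. f_equal. unfold q. ring. }
  rewrite E2. pose proof (Rpower_pos x q).
  assert (H3 : q * u / 2 <= 1 - / (1 + q * u)).
  { apply Rle_trans with (q * u / (1 + q * u)).
    - assert (0 < q * u) by nra. assert (q * u <= 1) by nra.
      apply frac_le; [lra|lra|]. nra.
    - right. field. nra. }
  apply Rle_trans with (2 / q * (Rpower x q * (1 - / (1 + q * u)))).
  - apply Rle_trans with (2 / q * (Rpower x q * (q * u / 2))).
    + right. field. lra.
    + apply Rmult_le_compat_l; [apply div_nonneg; lra|]. apply Rmult_le_compat_l; lra.
  - apply Rmult_le_compat_l; [apply div_nonneg; lra|]. nra.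
Qed.

Lemma W_bound p n : 0 < p < 1 -> (1 <= n)%nat ->
  sumR (map (fun i => Rpower (INR i) (- p)) (seq 1 n)) <= 2 / (1 - p) * Rpower (INR n) (1 - p).
Proof.
  intros Hp Hn. induction Hn.
  - simpl. rewrite Rpower_one, Rpower_one. apply Rle_trans with (2 / 1); [lra|].
    rewrite Rmult_1_r. apply frac_le; lra.
  - rewrite seq_S, map_app, sumR_app. replace (1 + m)%nat with (S m) by lia.
    change (sumR (map (fun i => Rpower (INR i) (- p)) [S m])) with (Rpower (INR (S m)) (- p) + 0).
    rewrite Rplus_0_r.
    pose proof (W_step (INR (S m)) p). rewrite S_INR in *.
    assert (1 <= INR m) by (apply (le_INR 1); auto).
    replace (INR m + 1 - 1) with (INR m) in H by ring.
    specialize (H ltac:(lra) Hp). lra.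
Qed.

Lemma exists_big {A} (l : list A) (y w : A -> R) T : l <> [] -> 0 < T ->
  (forall i, In i l -> 0 < w i) -> T <= sumR (map y l) ->
  exists i, In i l /\ T * w i <= y i * sumR (map w l).
Proof.
  intros Hl HT Hw HS. apply NNPP. intro Hn.
  assert (Hall : forall i, In i l -> y i * sumR (map w l) < T * w i).
  { intros i Hi. apply Rnot_le_lt. intro Hc. apply Hn. exists i; auto. }
  assert (HW : 0 < sumR (map w l)).
  { destruct l as [|a l']; [congruence|]. simpl. pose proof (Hw a (or_introl eq_refl)).
    assert (0 <= sumR (map w l')) by (apply sumR_map_nonneg; intros; left; apply Hw; right; auto). lra. }
  assert (Hs : sumR (map (fun i => y i * sumR (map w l)) l) < sumR (map (fun i => T * w i) l)).
  { clear Hn HS HW. generalize Hall. clear Hall. generalize (sumR (map w l)) as W. intros W Hall.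
    destruct l as [|a l']; [congruence|]. simpl.
    assert (H1 : y a * W < T * w a) by (apply Hall; left; auto).
    assert (sumR (map (fun i => y i * W) l') <= sumR (map (fun i => T * w i) l')).
    { apply sumR_map_le. intros. left. apply Hall. right. auto. }
    lra. }
  rewrite (sumR_map_ext (fun i => y i * sumR (map w l)) (fun i => sumR (map w l) * y i)) in Hs by (intros; ring).
  rewrite !sumR_map_scal in Hs. nra.
Qed.

Lemma sumR_ge_elem {A} (f : A -> R) l j : (forall i, In i l -> 0 <= f i) -> In j l -> f j <= sumR (map f l).
Proof.
  induction l as [|a l IH]; intros Hn Hj; [easy|]. simpl.
  assert (0 <= sumR (map f l)) by (apply sumR_map_nonneg; intros; apply Hn; right; auto).
  destruct Hj as [<-|Hj]; [lra|]. assert (0 <= f a) by (apply Hn; left; auto).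
  assert (f j <= sumR (map f l)) by (apply IH; auto; intros; apply Hn; right; auto). lra.
Qed.

Lemma event_bound {A} (l : list A) (y w : A -> R) T (k : nat) : l <> [] -> 0 < T ->
  (forall i, In i l -> 0 < w i) -> (forall i, In i l -> 0 <= y i) ->
  (if Rle_dec T (sumR (map y l)) then 1 else 0) <=
  sumR (map (fun i => (y i * sumR (map w l) / (T * w i)) ^ k) l).
Proof.
  intros Hl HT Hw Hy.
  assert (HW : 0 <= sumR (map w l)) by (apply sumR_map_nonneg; intros; left; apply Hw; auto).
  assert (Hnn : forall i, In i l -> 0 <= (y i * sumR (map w l) / (T * w i)) ^ k).
  { intros i Hi. apply pow_le. apply div_nonneg; [apply Rmult_le_pos; auto|]. apply Rmult_lt_0_compat; auto. }
  destruct (Rle_dec T (sumR (map y l))) as [HS|HS].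
  - destruct (exists_big l y w T Hl HT Hw HS) as [j [Hj Hjb]].
    assert (H1 : 1 <= (y j * sumR (map w l) / (T * w j)) ^ k).
    { apply pow_R1_Rle. pose proof (Hw j Hj).
      apply Rmult_le_reg_r with (T * w j); [apply Rmult_lt_0_compat; auto|].
      unfold Rdiv. rewrite Rmult_assoc, Rinv_l by (apply Rgt_not_eq, Rmult_lt_0_compat; auto). lra. }
    eapply Rle_trans; [exact H1|]. apply (sumR_ge_elem (fun i => (y i * sumR (map w l) / (T * w i)) ^ k)); auto.
  - apply sumR_map_nonneg. auto.
Qed.



Lemma pow_exp A k : (exp A) ^ k = exp (INR k * A).
Proof. induction k; simpl pow. - simpl. rewrite Rmult_0_l, exp_0. auto.
  - rewrite IHk, <- exp_plus, S_INR. f_equal. ring. Qed.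

Lemma pow_alg (d r W Tw : R) k : ((d / r) ^ 2 * W / Tw) ^ k = (W / Tw) ^ k * (/ r) ^ (2 * k) * d ^ (2 * k).
Proof. unfold Rdiv. rewrite !Rpow_mult_distr, !pow_mult. ring. Qed.

Lemma combine x y p c a k K : 0 < x -> 0 < y -> K = (2 * k)%nat -> a - c * INR K = - (INR k * p) ->
  (/ Rpower x (- p)) ^ k * (/ Rpower (y * x) c) ^ K * Rpower (y * x) a = Rpower y (- (INR k * p)).
Proof.
  intros Hx Hy HK Ha. unfold Rpower. rewrite ln_mult by auto.
  rewrite <- !exp_Ropp, !pow_exp, <- !exp_plus. f_equal.
  replace a with (c * INR K - INR k * p) by lra. ring.
Qed.

Lemma term_bound beta m n i k eta C W T : 0 < beta -> (1 <= m)%nat -> (1 <= i <= n)%nat -> (1 <= k)%nat ->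
  0 <= W -> 0 < T -> 0 <= C -> eta <= 1 ->
  (forall t, (1 <= t)%nat -> Pq beta (2 * k) t <= C * Rpower (INR t) (INR (2 * k) * (1 + eta) / (2 + beta))) ->
  expect beta (m * n) (fun fs => ((INR (maxdegH m (m * i) (heads fs)) / Rpower (INR (m * i)) (2 / (2 + beta))) ^ 2
       * W / (T * Rpower (INR i) (- (2 * (1 - eta) / (2 + beta))))) ^ k)
  <= (W / T) ^ k * (INR m ^ (2 * k) * C * rise (2 * k) (1 + beta)) * (2 * INR m * INR n).
Proof.
  intros Hb Hm Hi Hk HW HT HC Heta HPq.
  set (p := 2 * (1 - eta) / (2 + beta)). set (c := 2 / (2 + beta)).
  set (a := INR (2 * k) * (1 + eta) / (2 + beta)).
  set (w := Rpower (INR i) (- p)). set (r := Rpower (INR (m * i)) c).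
  set (R1 := rise (2 * k) (1 + beta)).
  assert (Hw : 0 < w) by apply Rpower_pos. assert (Hr : 0 < r) by apply Rpower_pos.
  assert (HR1 : 0 < R1) by (apply rise_pos; lra).
  assert (Hxi : 0 < INR i) by (apply lt_0_INR; lia). assert (Hxm : 1 <= INR m) by (apply (le_INR 1); lia).
  assert (Hmi : (1 <= m * i)%nat) by nia.
  unfold expect. rewrite (expect_ext _ _ _ _ _ (fun fs => ((W / (T * w)) ^ k * (/ r) ^ (2 * k)) * INR (maxdegH m (m * i) (heads fs)) ^ (2 * k)))
    by (intros; rewrite pow_alg; ring).
  rewrite expect_scal.
  assert (H1 := Hmoment beta m (m * i) (m * n) (2 * k) Hb Hm ltac:(nia) ltac:(lia)). unfold expect in H1.
  assert (H2 := HPq (m * i)%nat Hmi). fold a in H2.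
  assert (G0 : 0 <= (W / (T * w)) ^ k * (/ r) ^ (2 * k)).
  { apply Rmult_le_pos; apply pow_le; [apply div_nonneg; [auto| nra]| left; apply Rinv_0_lt_compat; auto]. }
  eapply Rle_trans; [apply Rmult_le_compat_l; [exact G0| exact H1]|].
  assert (Hmn : INR (m * i + m) <= 2 * INR m * INR n).
  { replace (2 * INR m * INR n) with (INR (2 * m * n)) by (rewrite !mult_INR; simpl; ring).
    apply le_INR. nia. }
  assert (Hpos : 0 <= INR (m * i + m)) by apply pos_INR.
  apply Rle_trans with ((W / (T * w)) ^ k * (/ r) ^ (2 * k) *
      (INR m ^ (2 * k) * (INR (m * i + m) * (C * Rpower (INR (m * i)) a * R1)))).
  { apply Rmult_le_compat_l; auto. apply Rmult_le_compat_l; [apply pow_le; lra|].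
    apply Rmult_le_compat_l; auto. apply Rmult_le_compat_r; lra. }
  assert (Hcomb : (/ w) ^ k * (/ r) ^ (2 * k) * Rpower (INR (m * i)) a = Rpower (INR m) (- (INR k * p))).
  { unfold w, r. rewrite mult_INR. apply combine; auto; try lra.
    unfold a, c, p. rewrite mult_INR. simpl INR. field. lra. }
  assert (Hle1 : Rpower (INR m) (- (INR k * p)) <= 1).
  { rewrite <- (Rpower_O (INR m)) by lra. apply Rle_Rpower; auto.
    assert (0 <= p). { unfold p. apply div_nonneg; lra. }
    pose proof (pos_INR k). nra. }
  replace ((W / (T * w)) ^ k * (/ r) ^ (2 * k) *
      (INR m ^ (2 * k) * (INR (m * i + m) * (C * Rpower (INR (m * i)) a * R1))))
    with ((W / T) ^ k * (INR m ^ (2 * k) * C * R1) * INR (m * i + m) *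
          ((/ w) ^ k * (/ r) ^ (2 * k) * Rpower (INR (m * i)) a)).
  2:{ unfold Rdiv. rewrite Rinv_mult. rewrite !Rpow_mult_distr. ring. }
  rewrite Hcomb.
  assert (0 <= (W / T) ^ k * (INR m ^ (2 * k) * C * R1)).
  { apply Rmult_le_pos; [apply pow_le, div_nonneg; auto|]. apply Rmult_le_pos; [|lra].
    apply Rmult_le_pos; [apply pow_le; lra| auto]. }
  rewrite Rmult_assoc. apply Rmult_le_compat_l; auto.
  pose proof (Rpower_pos (INR m) (- (INR k * p))). nra.
Qed.


Theorem lemma8 (beta : R) (m : nat) (hbeta : 0 < beta) (hm : (1 <= m)%nat)
  (delta gamma : R) (hdelta : 0 < delta) (hgamma : 0 < gamma) :
  exists L : R, forall n : nat, (1 <= n)%nat ->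
    prob_B beta m n delta <= L * Rpower (INR n) (- gamma).
Proof.
  set (eta := Rmin (1 / 2) (delta * (2 + beta) / 4)).
  assert (He1 : eta <= 1 / 2) by apply Rmin_l.
  assert (He2 : eta <= delta * (2 + beta) / 4) by apply Rmin_r.
  assert (He0 : 0 < eta) by (apply Rmin_glb_lt; [lra| apply Rdiv_lt_0_compat; nra]).
  set (p := 2 * (1 - eta) / (2 + beta)). set (q := 1 - p).
  assert (Hp : 0 < p < 1).
  { unfold p. split; [apply Rdiv_lt_0_compat; lra|]. apply Rmult_lt_reg_r with (2 + beta); [lra|].
    unfold Rdiv. rewrite Rmult_assoc, Rinv_l by lra. lra. }
  assert (Hq : 0 < q) by (unfold q; lra).
  destruct (INR_unbounded (2 * (2 + gamma) / delta)) as [k0 Hk0]. set (k := S k0).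
  assert (Hkd : 2 + gamma <= INR k * delta / 2).
  { assert (INR k0 <= INR k) by (apply le_INR; unfold k; lia).
    assert (2 * (2 + gamma) / delta * delta = 2 * (2 + gamma)) by (field; lra).
    assert (2 * (2 + gamma) / delta * delta <= INR k * delta) by (apply Rmult_le_compat_r; lra). lra. }
  destruct (Pq_bound beta (2 * k) eta hbeta He0) as [C [HC HPq]].
  set (M0 := INR m ^ (2 * k) * C * rise (2 * k) (1 + beta)).
  assert (HM0 : 0 <= M0).
  { unfold M0. apply Rmult_le_pos; [apply Rmult_le_pos; [apply pow_le, pos_INR| lra]|].
    left; apply rise_pos; lra. }
  exists (M0 * 2 * INR m * (2 / q) ^ k).
  intros n Hn.
  assert (Hn1 : 1 <= INR n) by (apply (le_INR 1); auto).
  set (T := Rpower (INR n) (beta / (2 + beta) + delta)).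
  assert (HT : 0 < T) by apply Rpower_pos.
  set (w := fun i : nat => Rpower (INR i) (- p)).
  set (W := sumR (map w (seq 1 n))).
  assert (HW : 0 <= W) by (apply sumR_map_nonneg; intros; left; apply Rpower_pos).
  set (y := fun (i : nat) (fs : list choice) =>
     (INR (maxdegH m (m * i) (heads fs)) / Rpower (INR (m * i)) (2 / (2 + beta))) ^ 2).
  unfold prob_B, expect.
  apply Rle_trans with (expect_from beta (m * n - 1) 1 []
     (fun fs => sumR (map (fun i => (y i fs * W / (T * w i)) ^ k) (seq 1 n)))).
  { apply expect_mono; auto.
    { split; [lia|]. split; [reflexivity|]. intros j Hj. simpl in Hj. lia. }
    intros x _. unfold B_ind. cbv zeta.
    apply (event_bound (seq 1 n) (fun i => y i x) w T k).
    - destruct n; [lia|]. simpl. congruence.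
    - auto.
    - intros; apply Rpower_pos.
    - intros; unfold y. apply pow2_ge_0. }
  rewrite expect_sum.
  eapply Rle_trans.
  { apply sumR_le_const with (c := (W / T) ^ k * M0 * (2 * INR m * INR n)).
    intros i Hi. apply in_seq in Hi.
    pose proof (term_bound beta m n i k eta C W T hbeta hm ltac:(lia) ltac:(unfold k; lia) HW HT ltac:(lra) ltac:(lra) HPq).
    unfold expect in H. exact H. }
  rewrite length_seq.
  assert (HWT : W / T <= 2 / q * Rpower (INR n) (- (delta / 2))).
  { assert (HWb : W <= 2 / q * Rpower (INR n) q) by (apply W_bound; auto).
    apply Rle_trans with (2 / q * Rpower (INR n) q / T).
    { unfold Rdiv. apply Rmult_le_compat_r; [left; apply Rinv_0_lt_compat; auto| exact HWb]. }
    unfold T. unfold Rdiv. rewrite Rmult_assoc, <- Rpower_Ropp, <- Rpower_plus.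
    apply Rmult_le_compat_l; [apply div_nonneg; lra|]. apply Rle_Rpower; auto.
    unfold q, p. apply Rle_trans with (2 * eta / (2 + beta) - delta).
    - right. field. lra.
    - assert (2 * eta / (2 + beta) <= delta / 2).
      { apply Rmult_le_reg_r with (2 + beta); [lra|]. unfold Rdiv. rewrite Rmult_assoc, Rinv_l by lra. nra. }
      lra. }
  assert (HWT0 : 0 <= W / T) by (apply div_nonneg; auto).
  assert (Hpk : (W / T) ^ k <= (2 / q) ^ k * Rpower (INR n) (- (INR k * delta / 2))).
  { eapply Rle_trans; [apply pow_incr; split; [exact HWT0| exact HWT]|].
    rewrite Rpow_mult_distr. apply Req_le. f_equal.
    rewrite <- Rpower_pow by apply Rpower_pos. rewrite Rpower_mult. f_equal. field. }
  assert (Hfin : INR n * INR n * Rpower (INR n) (- (INR k * delta / 2)) <= Rpower (INR n) (- gamma)).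
  { replace (INR n * INR n) with (Rpower (INR n) 2).
    2:{ replace 2 with (INR 2) by reflexivity. rewrite Rpower_pow by lra. simpl. ring. }
    rewrite <- Rpower_plus. apply Rle_Rpower; auto. lra. }
  assert (Hnn : 0 <= INR n) by lra.
  apply Rle_trans with (INR n * ((2 / q) ^ k * Rpower (INR n) (- (INR k * delta / 2)) * M0 * (2 * INR m * INR n))).
  { apply Rmult_le_compat_l; auto. apply Rmult_le_compat_r.
    { apply Rmult_le_pos; [|lra]. apply Rmult_le_pos; [lra| apply pos_INR]. }
    apply Rmult_le_compat_r; auto. }
  replace (INR n * ((2 / q) ^ k * Rpower (INR n) (- (INR k * delta / 2)) * M0 * (2 * INR m * INR n)))
    with (M0 * 2 * INR m * (2 / q) ^ k * (INR n * INR n * Rpower (INR n) (- (INR k * delta / 2)))) by ring.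
  apply Rmult_le_compat_l; auto.
  apply Rmult_le_pos; [|apply pow_le, div_nonneg; lra]. pose proof (pos_INR m). nra.
Qed.
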